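(* Let $\mathbb{X}$ be a real or complex Banach algebra with identity, $\mathcal{G}$ its group of units, $k\ge1$ an integer, and $g_n:\mathbb{X}\to\mathbb{X}$ ($n\ge0$) functions with $|g_n(\xi)|\le\sigma|\xi|$ for all $\xi\in\mathbb{X}$, all $n$, for some real $\sigma>0$. Let $a_0,\dots,a_k\in\mathbb{X}$ with $a_k\ne0$ and $b\in\mathcal{G}$ with $|b|<1$. Suppose $$a_0b^k+a_1b^{k-1}+\cdots+a_k=b^{k+1}$$ and $$\sum_{i=0}^{k-1}\big|b^{i+1}-a_0b^i-a_1b^{i-1}-\cdots-a_i\big|<1-\sigma.$$ Then every solution of $$x_{n+1}=a_0x_n+a_1x_{n-1}+\cdots+a_kx_{n-k}+g_n(x_n-bx_{n-1}),\quad n\ge0,$$ with initial values in $\mathbb{X}$ converges to $0$.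
   Context: A Banach algebra with identity is a Banach space $\mathbb{X}$ (norm $|\cdot|$) with an associative bilinear multiplication satisfying $|xy|\le|x||y|$ and identity $1$ with $|1|=1$; $\mathcal{G}$ is the set of invertible elements. *)

(* Defs.v *)
From Stdlib Require Import Reals.
Open Scope R_scope.

(* A real Banach algebra with identity (a complex Banach algebra is in
   particular a real one by restriction of scalars, with the same norm,
   product and identity). *)
Record BanachAlgebra := {
  carrier :> Type;
  bzero : carrier;
  bone : carrier;
  badd : carrier -> carrier -> carrier;
  bopp : carrier -> carrier;
  bmul : carrier -> carrier -> carrier;
  bscal : R -> carrier -> carrier;
  bnorm : carrier -> R;
  badd_assoc : forall x y z, badd x (badd y z) = badd (badd x y) z;
  badd_comm : forall x y, badd x y = badd y x;
  badd_zero : forall x, badd x bzero = x;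
  badd_opp : forall x, badd x (bopp x) = bzero;
  bscal_one : forall x, bscal 1 x = x;
  bscal_assoc : forall c d x, bscal c (bscal d x) = bscal (c * d) x;
  bscal_addl : forall c d x, bscal (c + d) x = badd (bscal c x) (bscal d x);
  bscal_addr : forall c x y, bscal c (badd x y) = badd (bscal c x) (bscal c y);
  bnorm_ge0 : forall x, 0 <= bnorm x;
  bnorm_eq0 : forall x, bnorm x = 0 -> x = bzero;
  bnorm_triangle : forall x y, bnorm (badd x y) <= bnorm x + bnorm y;
  bnorm_scal : forall c x, bnorm (bscal c x) = Rabs c * bnorm x;
  bcomplete : forall u : nat -> carrier,
    (forall eps, eps > 0 -> exists N, forall m n, (m >= N)%nat -> (n >= N)%nat ->
        bnorm (badd (u m) (bopp (u n))) < eps) ->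
    exists l, forall eps, eps > 0 -> exists N, forall n, (n >= N)%nat ->
        bnorm (badd (u n) (bopp l)) < eps;
  bmul_assoc : forall x y z, bmul x (bmul y z) = bmul (bmul x y) z;
  bmul_addl : forall x y z, bmul (badd x y) z = badd (bmul x z) (bmul y z);
  bmul_addr : forall x y z, bmul x (badd y z) = badd (bmul x y) (bmul x z);
  bmul_scall : forall c x y, bmul (bscal c x) y = bscal c (bmul x y);
  bmul_scalr : forall c x y, bmul x (bscal c y) = bscal c (bmul x y);
  bmul_onel : forall x, bmul bone x = x;
  bmul_oner : forall x, bmul x bone = x;
  bnorm_mul : forall x y, bnorm (bmul x y) <= bnorm x * bnorm y;
  bnorm_one : bnorm bone = 1
}.

Arguments bzero {_}. Arguments bone {_}. Arguments badd {_}. Arguments bopp {_}.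
Arguments bmul {_}. Arguments bscal {_}. Arguments bnorm {_}.

Definition bsub {X : BanachAlgebra} (x y : X) : X := badd x (bopp y).

Fixpoint bpow {X : BanachAlgebra} (x : X) (n : nat) : X :=
  match n with
  | O => bone
  | S m => bmul x (bpow x m)
  end.

Fixpoint bsum {X : BanachAlgebra} (f : nat -> X) (n : nat) : X :=
  match n with
  | O => f O
  | S m => badd (bsum f m) (f (S m))
  end.

Definition invertible {X : BanachAlgebra} (b : X) : Prop :=
  exists c : X, bmul b c = bone /\ bmul c b = bone.

(* Main.v *)
Require Import Defs.
From Stdlib Require Import Reals Lra Lia.
Open Scope R_scope.

Arguments badd_assoc {_}. Arguments badd_comm {_}. Arguments badd_zero {_}. Arguments badd_opp {_}. Arguments bmul_assoc {_}. Arguments bmul_addl {_}. Arguments bmul_addr {_}. Arguments bmul_onel {_}. Arguments bmul_oner {_}. Arguments bscal_addl {_}. Arguments bscal_one {_}. Arguments bnorm_scal {_}. Arguments bnorm_triangle {_}. Arguments bnorm_mul {_}. Arguments bnorm_ge0 {_}.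
Section Alg.
Context {X : BanachAlgebra}.
Implicit Types x y z : X.

Lemma add0l x : badd bzero x = x.
Proof. rewrite badd_comm; apply badd_zero. Qed.
Lemma oppl x : badd (bopp x) x = bzero.
Proof. rewrite badd_comm; apply badd_opp. Qed.
Lemma add_cancel x y z : badd x y = badd x z -> y = z.
Proof.
  intro H. rewrite <- (add0l y), <- (add0l z), <- (oppl x), <- !badd_assoc, H. reflexivity.
Qed.
Lemma opp_unique x y : badd x y = bzero -> y = bopp x.
Proof. intro H. apply (add_cancel x). rewrite H, badd_opp. reflexivity. Qed.
Lemma opp_add x y : bopp (badd x y) = badd (bopp x) (bopp y).
Proof.
  symmetry. apply opp_unique.
  rewrite (badd_comm (bopp x)), badd_assoc, <- (badd_assoc x y), badd_opp, badd_zero, badd_opp.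
  reflexivity.
Qed.
Lemma mul0r x : bmul bzero x = bzero.
Proof.
  apply (add_cancel (bmul bzero x)). rewrite <- bmul_addl, !badd_zero. reflexivity.
Qed.
Lemma mulr0 x : bmul x bzero = bzero.
Proof.
  apply (add_cancel (bmul x bzero)). rewrite <- bmul_addr, !badd_zero. reflexivity.
Qed.
Lemma mulrN x y : bmul x (bopp y) = bopp (bmul x y).
Proof. apply opp_unique. rewrite <- bmul_addr, badd_opp. apply mulr0. Qed.
Lemma mulNr x y : bmul (bopp x) y = bopp (bmul x y).
Proof. apply opp_unique. rewrite <- bmul_addl, badd_opp. apply mul0r. Qed.
Lemma scal0 x : bscal 0 x = bzero.
Proof.
  apply (add_cancel (bscal 0 x)). rewrite <- bscal_addl, Rplus_0_r, badd_zero. reflexivity.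
Qed.
Lemma opp_scal x : bopp x = bscal (-1) x.
Proof.
  symmetry. apply opp_unique. rewrite <- (bscal_one x) at 1.
  rewrite <- bscal_addl. replace (1 + -1) with 0 by ring. apply scal0.
Qed.
Lemma norm_opp x : bnorm (bopp x) = bnorm x.
Proof. rewrite opp_scal, bnorm_scal. replace (Rabs (-1)) with 1. ring. rewrite Rabs_left; lra. Qed.
Lemma norm_sub x y : bnorm (badd x (bopp y)) <= bnorm x + bnorm y.
Proof. rewrite <- (norm_opp y). apply bnorm_triangle. Qed.
Lemma subK x y : badd (badd x (bopp y)) y = x.
Proof. rewrite <- badd_assoc, oppl, badd_zero. reflexivity. Qed.
Lemma addK x y : badd (badd x y) (bopp y) = x.
Proof. rewrite <- badd_assoc, badd_opp, badd_zero. reflexivity. Qed.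

Lemma pow_succ_r x n : bmul (bpow x n) x = bpow x (S n).
Proof.
  induction n; simpl. rewrite bmul_onel, bmul_oner; reflexivity.
  rewrite <- bmul_assoc, IHn. reflexivity.
Qed.

Lemma bsum_ext (f g : nat -> X) n : (forall j, (j <= n)%nat -> f j = g j) -> bsum f n = bsum g n.
Proof.
  induction n; intro H; simpl. apply H; lia.
  rewrite IHn by (intros; apply H; lia). rewrite H by lia. reflexivity.
Qed.
Lemma bsum_mulr (f : nat -> X) c n : bmul (bsum f n) c = bsum (fun j => bmul (f j) c) n.
Proof. induction n; simpl. reflexivity. rewrite bmul_addl, IHn. reflexivity. Qed.

Fixpoint ss (f : nat -> X) n := match n with O => bzero | S m => badd (ss f m) (f m) end.
Fixpoint rs (f : nat -> R) n := match n with O => 0 | S m => rs f m + f m end.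

Lemma bsum_ss f n : bsum f n = ss f (S n).
Proof. induction n; simpl. rewrite add0l; reflexivity. rewrite IHn; reflexivity. Qed.
Lemma ss_ext (f g : nat -> X) n : (forall j, (j < n)%nat -> f j = g j) -> ss f n = ss g n.
Proof.
  induction n; intro H; simpl. reflexivity.
  rewrite IHn by (intros; apply H; lia). rewrite H by lia. reflexivity.
Qed.
Lemma ss_shift f n : ss f (S n) = badd (f O) (ss (fun i => f (S i)) n).
Proof.
  induction n. simpl. rewrite add0l, badd_zero; reflexivity.
  change (ss f (S (S n))) with (badd (ss f (S n)) (f (S n))). rewrite IHn.
  simpl. rewrite badd_assoc. reflexivity.
Qed.
Lemma ss_norm f n : bnorm (ss f n) <= rs (fun i => bnorm (f i)) n.
Proof.
  induction n; simpl.
  - replace bzero with (bscal 0 (@bone X)) by apply scal0. rewrite bnorm_scal, Rabs_R0. lra.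
  - eapply Rle_trans. apply bnorm_triangle. lra.
Qed.

End Alg.

Lemma rs_le f g n : (forall i, (i < n)%nat -> f i <= g i) -> rs f n <= rs g n.
Proof. induction n; intro H; simpl. lra. assert (f n <= g n) by (apply H; lia).
  assert (rs f n <= rs g n) by (apply IHn; intros; apply H; lia). lra. Qed.
Lemma rs_scal f t n : rs (fun i => f i * t) n = rs f n * t.
Proof. induction n; simpl. ring. rewrite IHn; ring. Qed.
Lemma rs_ge0 f n : (forall i, 0 <= f i) -> 0 <= rs f n.
Proof. intro H; induction n; simpl. lra. specialize (H n); lra. Qed.
Lemma rs_term f n i : (forall i, 0 <= f i) -> (i < n)%nat -> f i <= rs f n.
Proof. intros H; induction n; intro Hi. lia. simpl.
  destruct (Nat.eq_dec i n). subst. pose proof (rs_ge0 f n H); lra.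
  assert (f i <= rs f n) by (apply IHn; lia). specialize (H n); lra. Qed.
Lemma rs_sum f n : rs f (S n) = sum_f_R0 f n.
Proof. induction n; simpl. ring. simpl in IHn; rewrite <- IHn. ring. Qed.
Lemma pow_dec r m n : 0 <= r <= 1 -> (m <= n)%nat -> r ^ n <= r ^ m.
Proof.
  intros H Hmn. replace n with (m + (n - m))%nat by lia. rewrite pow_add.
  assert (0 <= r ^ m) by (apply pow_le; lra).
  assert (r ^ (n - m) <= 1) by (rewrite <- (pow1 (n-m)); apply pow_incr; lra).
  assert (0 <= r ^ (n-m)) by (apply pow_le; lra). nra.
Qed.
Lemma bernoulli t k : 0 <= t <= 1 -> 1 - INR k * t <= (1 - t) ^ k.
Proof.
  intro H; induction k. simpl; lra. rewrite S_INR; simpl.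
  assert (0 <= INR k) by apply pos_INR. nra.
Qed.

Section Tele.
Context {X : BanachAlgebra}.
Variable a : nat -> X.
Variable b : X.
Variable y : nat -> X.

Definition dd (i : nat) : X := match i with O => bone
  | S i => bsub (bpow b (S i)) (bsum (fun j => bmul (a j) (bpow b (i - j))) i) end.

Lemma d_rec m : badd (dd (S m)) (a m) = bmul (dd m) b.
Proof.
  destruct m as [|m].
  - simpl. unfold bsub. rewrite !bmul_oner, bmul_onel, subK. reflexivity.
  - unfold dd, bsub. cbn [bsum]. rewrite Nat.sub_diag. simpl bpow at 3. rewrite bmul_oner.
    rewrite bmul_addl, mulNr, pow_succ_r, bsum_mulr.
    rewrite (bsum_ext (fun j => bmul (bmul (a j) (bpow b (m - j))) b)
                        (fun j => bmul (a j) (bpow b (S m - j)))).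
    2:{ intros j Hj. rewrite <- bmul_assoc, pow_succ_r. f_equal. f_equal. lia. }
    rewrite opp_add, badd_assoc, subK. reflexivity.
Qed.

Definition zz p := bsub (y (S p)) (bmul b (y p)).

Lemma tele m : forall p,
  badd (badd (ss (fun i => bmul (dd i) (zz (p + m - i))) (S m))
             (ss (fun j => bmul (a j) (y (p + m - j))) m))
       (bmul (dd m) (bmul b (y p))) = y (S (p + m)).
Proof.
  induction m; intro p.
  - simpl. rewrite !Nat.add_0_r, Nat.sub_0_r, add0l, badd_zero, !bmul_onel.
    unfold zz, bsub. apply subK.
  - specialize (IHm (S p)).
    replace (p + S m)%nat with (S p + m)%nat by lia.
    change (ss ?f (S (S m))) with (badd (ss f (S m)) (f (S m))).
    change (ss ?f (S m)) with (badd (ss f m) (f m)) at 2.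
    cbv beta.
    replace (S p + m - S m)%nat with p by lia.
    replace (S p + m - m)%nat with (S p) by lia.
    rewrite <- IHm.
    set (U := ss _ (S m)). set (V := ss _ m).
    rewrite (bmul_assoc (dd m) b (y (S p))), <- (d_rec m), bmul_addl.
    unfold zz, bsub. rewrite bmul_addr, mulrN.
    set (D := dd (S m)). set (W := bmul D (bmul b (y p))).
    set (DY := bmul D (y (S p))). set (AY := bmul (a m) (y (S p))).
    (* ((U + (DY + -W)) + (V + AY)) + W = (U+V) + (DY + AY) *)
    rewrite <- !badd_assoc. f_equal.
    rewrite (badd_assoc V AY W), (badd_comm (bopp W)), addK, badd_assoc, (badd_comm DY V), <- badd_assoc. reflexivity.
Qed.
End Tele.

Theorem corollary2 (X : BanachAlgebra) (k : nat) (hk : (1 <= k)%nat)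
  (g : nat -> X -> X) (sigma : R) (hsigma : sigma > 0)
  (hg : forall n xi, bnorm (g n xi) <= sigma * bnorm xi)
  (a : nat -> X) (hak : a k <> bzero)
  (b : X) (hbinv : invertible b) (hb1 : bnorm b < 1)
  (hchar : bsum (fun j => bmul (a j) (bpow b (k - j))) k = bpow b (S k))
  (hsum : sum_f_R0 (fun i =>
            bnorm (bsub (bpow b (S i)) (bsum (fun j => bmul (a j) (bpow b (i - j))) i)))
            (k - 1) < 1 - sigma)
  (y : nat -> X)
  (hy : forall n, y (n + k + 1)%nat =
          badd (bsum (fun j => bmul (a j) (y (n + k - j)%nat)) k)
               (g n (bsub (y (n + k)%nat) (bmul b (y (n + k - 1)%nat))))) :
  Un_cv (fun n => bnorm (y n)) 0.
Proof.
  set (w := fun m => bnorm (zz b y m)).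
  set (c := fun i => bnorm (dd a b (S i))).
  assert (Hw0 : forall m, 0 <= w m) by (intro; apply bnorm_ge0).
  assert (Hc0 : forall i, 0 <= c i) by (intro; apply bnorm_ge0).
  assert (HC : rs c k < 1 - sigma).
  { replace k with (S (k-1)) at 1 by lia. rewrite rs_sum. exact hsum. }
  assert (Hdk : dd a b (S k) = bzero).
  { unfold dd, bsub. rewrite hchar. apply badd_opp. }
  assert (Key : forall n, w (n + k)%nat <= sigma * w (n + k - 1)%nat
                 + rs (fun i => c i * w (n + k - S i)%nat) k).
  { intro n.
    pose proof (tele a b y k n) as T.
    specialize (hy n). rewrite Nat.add_1_r in hy.
    rewrite bsum_ss in hy. change (ss ?f (S k)) with (badd (ss f k) (f k)) in hy.
    rewrite <- T in hy. clear T.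
    replace (n + k - k)%nat with n in hy by lia.
    rewrite bmul_assoc, <- d_rec, Hdk, bmul_addl, mul0r, add0l in hy.
    set (G := g n _) in hy.
    set (SF := ss _ (S k)) in hy. set (SA := ss _ k) in hy.
    set (Y := bmul (a k) (y n)) in hy.
    rewrite <- badd_assoc, (badd_comm SF) in hy. apply add_cancel in hy.
    unfold SF in hy. rewrite ss_shift, Nat.sub_0_r in hy. change (dd a b 0) with (@bone X) in hy. rewrite bmul_onel in hy.
    assert (E : zz b y (n + k) = badd G (bopp (ss (fun i => bmul (dd a b (S i)) (zz b y (n + k - S i))) k))).
    { rewrite <- hy. rewrite addK. reflexivity. }
    unfold w at 1. rewrite E. eapply Rle_trans. apply norm_sub.
    apply Rplus_le_compat.
    - unfold G. eapply Rle_trans. apply hg. unfold w, zz.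
      replace (S (n + k - 1)) with (n + k)%nat by lia. lra.
    - eapply Rle_trans. apply ss_norm. apply rs_le. intros i _. apply bnorm_mul. }
  set (q := sigma + rs c k).
  assert (Hq : 0 < q < 1). { pose proof (rs_ge0 c k Hc0). unfold q; lra. }
  assert (Hk1 : 1 <= INR k) by (apply (le_INR 1 k) in hk; simpl in hk; lra).
  set (t := (1 - q) / INR k).
  assert (Ht : 0 < t < 1).
  { unfold t; split. apply Rdiv_lt_0_compat; lra.
    apply (Rmult_lt_reg_r (INR k)). lra. unfold Rdiv. rewrite Rmult_assoc, Rinv_l by lra. lra. }
  set (r := 1 - t).
  assert (Hr : 0 < r < 1) by (unfold r; lra).
  assert (Hrk : q <= r ^ k).
  { unfold r. eapply Rle_trans. 2: apply bernoulli; lra.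
    unfold t. field_simplify; lra. }
  assert (Hrk0 : 0 < r ^ k) by (apply pow_lt; lra).
  set (B := rs w k / r ^ k).
  assert (HB0 : 0 <= B).
  { unfold B. apply Rle_mult_inv_pos. apply rs_ge0; auto. auto. }
  assert (Hz : forall N m, (m < N)%nat -> w m <= B * r ^ m).
  { induction N; intros m Hm. lia.
    destruct (Nat.lt_ge_cases m k) as [Hmk|Hmk].
    - eapply Rle_trans. apply (rs_term w k m Hw0 Hmk).
      replace (rs w k) with (B * r ^ k) by (unfold B; field; lra).
      apply Rmult_le_compat_l; auto. apply pow_dec; [lra|lia].
    - replace m with (m - k + k)%nat by lia. set (n := (m - k)%nat).
      eapply Rle_trans. apply Key.
      assert (Hn : 0 <= B * r ^ n) by (apply Rmult_le_pos; auto; apply pow_le; lra).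
      assert (H1 : w (n + k - 1)%nat <= B * r ^ n).
      { eapply Rle_trans. apply IHN. unfold n; lia.
        apply Rmult_le_compat_l; auto. apply pow_dec; [lra|lia]. }
      assert (H2 : rs (fun i => c i * w (n + k - S i)%nat) k <= rs c k * (B * r ^ n)).
      { rewrite <- rs_scal. apply rs_le. intros i Hi. apply Rmult_le_compat_l; auto.
        eapply Rle_trans. apply IHN. unfold n; lia.
        apply Rmult_le_compat_l; auto. apply pow_dec; [lra|lia]. }
      rewrite pow_add.
      assert (q * (B * r ^ n) <= r ^ k * (B * r ^ n)) by (apply Rmult_le_compat_r; auto).
      assert (sigma * w (n + k - 1)%nat <= sigma * (B * r ^ n)) by (apply Rmult_le_compat_l; lra).
      unfold q in *. replace (B * (r ^ n * r ^ k)) with (r ^ k * (B * r ^ n)) by ring. nra. }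
  set (beta := bnorm b).
  assert (Hbeta : 0 <= beta) by apply bnorm_ge0.
  set (rho := Rmax r ((1 + beta) / 2)).
  assert (Hrho1 : rho < 1) by (unfold rho; apply Rmax_lub_lt; unfold beta in *; lra).
  assert (Hrr : r <= rho) by apply Rmax_l.
  assert (Hrb : (1 + beta) / 2 <= rho) by apply Rmax_r.
  set (e := rho - beta).
  assert (He : 0 < e) by (unfold e; lra).
  set (C0 := bnorm (y 0%nat) + B / e + 1).
  assert (HC0 : B <= C0 * e).
  { assert (B / e * e = B) by (field; lra).
    assert (0 <= bnorm (y 0%nat)) by apply bnorm_ge0.
    assert (0 <= B / e) by (apply Rle_mult_inv_pos; lra).
    unfold C0. nra. }
  assert (HC0p : 0 < C0).
  { assert (0 <= bnorm (y 0%nat)) by apply bnorm_ge0.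
    assert (0 <= B / e) by (apply Rle_mult_inv_pos; lra). unfold C0; lra. }
  assert (Hy : forall m, bnorm (y m) <= C0 * rho ^ m).
  { induction m.
    - simpl. unfold C0. assert (0 <= B / e) by (apply Rle_mult_inv_pos; lra). lra.
    - assert (E : y (S m) = badd (zz b y m) (bmul b (y m))) by (unfold zz, bsub; rewrite subK; reflexivity).
      rewrite E. eapply Rle_trans. apply bnorm_triangle.
      assert (Hzm : w m <= B * rho ^ m).
      { eapply Rle_trans. apply (Hz (S m)); lia. apply Rmult_le_compat_l; auto.
        apply pow_incr; lra. }
      assert (Hbm : bnorm (bmul b (y m)) <= beta * (C0 * rho ^ m)).
      { eapply Rle_trans. apply bnorm_mul. apply Rmult_le_compat_l; auto. }
      assert (0 <= rho ^ m) by (apply pow_le; lra).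
      simpl. unfold w in Hzm. unfold e in HC0. nra. }
  intros eps Heps.
  destruct (pow_lt_1_zero rho) with (y := eps / C0) as [N HN].
  { rewrite Rabs_right; lra. }
  { apply Rdiv_lt_0_compat; lra. }
  exists N. intros n Hn. unfold R_dist. rewrite Rminus_0_r, Rabs_right by apply Rle_ge, bnorm_ge0.
  specialize (HN n Hn). rewrite Rabs_right in HN by (apply Rle_ge, pow_le; lra).
  eapply Rle_lt_trans. apply Hy.
  replace eps with (C0 * (eps / C0)) by (field; lra).
  apply Rmult_lt_compat_l; lra.
Qed.
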